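(* Let $\langle(\kappa_n,I_n):n<\omega\rangle$ be such that each $\kappa_n$ is a cardinal and $I_n$ is an ideal on $\kappa_n$, and let $\langle J_n:n<\omega\rangle$ be the associated ideals defined in the context. Then for every $n<\omega$ and $A\subseteq\prod_{\ell<n}\kappa_\ell$: $A\in J_n$ if and only if there are functions $f_0,\dots,f_{n-1}$ such that $\mathrm{Dom}(f_\ell)=\prod_{m=\ell+1}^{n-1}\kappa_m$, $\mathrm{Rang}(f_\ell)\subseteq I_\ell$, and $A\subseteq\bigcup_{\ell<n}A^n_\ell(f_\ell)$, where $$A^n_\ell(f_\ell)=\{\eta\in\textstyle\prod_{m<n}\kappa_m:\eta(\ell)\in f_\ell(\eta\restriction(\ell,n))\}$$ and $\eta\restriction(\ell,n)=\langle\eta(\ell+1),\dots,\eta(n-1)\rangle$.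
   Context: $J_n$ is an ideal on $\prod_{\ell<n}\kappa_\ell$ defined by induction: $J_0$ is the trivial ideal $\{\emptyset\}$ on $\{\langle\rangle\}$; $J_{n+1}=\{A\subseteq\prod_{\ell\le n}\kappa_\ell:\{\alpha<\kappa_n:\{\eta\in\prod_{\ell<n}\kappa_\ell:\eta^\frown\langle\alpha\rangle\in A\}\notin J_n\}\in I_n\}$. *)

(* Defs.v *)
From Stdlib Require Import List Arith.
Import ListNotations.

Section Defs.
Variable T : Type.

(* kappa l : the cardinal kappa_l, viewed as a set of elements of an ambient
   type T (e.g. the ordinals); kappa : nat -> (T -> Prop). *)

(* rho \in prod_{m = k}^{k+len-1} kappa_m, sequences represented as lists. *)
Definition inprod_from (kappa : nat -> T -> Prop) (k len : nat) (rho : list T) : Prop :=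
  length rho = len /\
  forall (i : nat) (x : T), nth_error rho i = Some x -> kappa (k + i) x.

Definition inprod (kappa : nat -> T -> Prop) (n : nat) (eta : list T) : Prop :=
  inprod_from kappa 0 n eta.

Definition is_ideal_on (X : T -> Prop) (I : (T -> Prop) -> Prop) : Prop :=
  (forall A, I A -> forall x, A x -> X x) /\
  I (fun _ => False) /\
  (forall A B : T -> Prop, I B -> (forall x, A x -> B x) -> I A) /\
  (forall A B : T -> Prop, I A -> I B -> I (fun x => A x \/ B x)) /\
  ~ I X.

Fixpoint J (kappa : nat -> T -> Prop) (I : nat -> (T -> Prop) -> Prop) (n : nat)
  (A : list T -> Prop) : Prop :=
  match n with
  | 0 => forall eta, ~ A eta
  | S n' => (forall eta, A eta -> inprod kappa (S n') eta) /\
            I n' (fun alpha => kappa n' alpha /\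
                     ~ J kappa I n' (fun eta => A (eta ++ [alpha])))
  end.

Definition A_set (kappa : nat -> T -> Prop) (n l : nat) (fl : list T -> (T -> Prop))
  (eta : list T) : Prop :=
  inprod kappa n eta /\
  exists x, nth_error eta l = Some x /\ fl (skipn (S l) eta) x.

End Defs.

(* Main.v *)
Require Import Defs.
From Stdlib Require Import List Arith Lia Classical IndefiniteDescription.
Import ListNotations.

Lemma snoc_inv (T : Type) (kappa : nat -> T -> Prop) k len rho :
  inprod_from T kappa k (S len) rho ->
  exists r a, rho = r ++ [a] /\ inprod_from T kappa k len r /\ kappa (k + len) a.
Proof.
  intros [Hl Hn].
  destruct (exists_last (l:=rho)) as [r [a Hr]].
  { intro E; subst; simpl in Hl; discriminate. }
  subst rho. rewrite length_app in Hl; simpl in Hl.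
  exists r, a. split; [reflexivity|]. split.
  - split; [lia|]. intros i x Hi.
    apply Hn. rewrite nth_error_app1; auto.
    apply nth_error_Some. congruence.
  - replace len with (length r) by lia. apply Hn.
    rewrite nth_error_app2 by lia. rewrite Nat.sub_diag. reflexivity.
Qed.

Lemma snoc_in (T : Type) (kappa : nat -> T -> Prop) k len r a :
  inprod_from T kappa k len r -> kappa (k + len) a ->
  inprod_from T kappa k (S len) (r ++ [a]).
Proof.
  intros [Hl Hn] Ha. subst len. split.
  - rewrite length_app; simpl; lia.
  - intros i x Hi. destruct (Nat.lt_ge_cases i (length r)).
    + rewrite nth_error_app1 in Hi by auto. eauto.
    + rewrite nth_error_app2 in Hi by auto.
      destruct (i - length r) eqn:E; simpl in Hi.
      * inversion Hi; subst. replace i with (length r) by lia. auto.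
      * destruct n; discriminate.
Qed.

Lemma skipn_snoc (T : Type) (l : nat) (eta : list T) a :
  l <= length eta -> skipn l (eta ++ [a]) = skipn l eta ++ [a].
Proof.
  intro H. rewrite skipn_app. replace (l - length eta) with 0 by lia. reflexivity.
Qed.

Theorem claim3p3 (T : Type) (kappa : nat -> T -> Prop)
  (I : nat -> (T -> Prop) -> Prop)
  (HI : forall n, is_ideal_on T (kappa n) (I n)) :
  forall (n : nat) (A : list T -> Prop),
    (forall eta, A eta -> inprod T kappa n eta) ->
    (J T kappa I n A <->
     exists f : nat -> list T -> (T -> Prop),
       (forall l, l < n -> forall rho, inprod_from T kappa (S l) (n - S l) rho ->
                  I l (f l rho)) /\
       (forall eta, A eta -> exists l, l < n /\ A_set T kappa n l (f l) eta)).
Proof.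
  induction n as [|n IH]; intros A HA.
  - simpl. split.
    + intros H. exists (fun _ _ _ => False). split; [intros; lia|].
      intros eta Ha; exfalso; eapply H; eauto.
    + intros [f [_ Hc]] eta Ha. destruct (Hc eta Ha) as [l [Hl _]]. lia.
  - simpl J. split.
    + intros [_ HB].
      set (B := fun alpha => kappa n alpha /\ ~ J T kappa I n (fun eta => A (eta ++ [alpha]))) in *.
      assert (Hex : forall alpha : T, exists g : nat -> list T -> T -> Prop,
        (forall l, l < n -> forall rho, inprod_from T kappa (S l) (n - S l) rho -> I l (g l rho)) /\
        (J T kappa I n (fun eta => A (eta ++ [alpha])) ->
         forall eta, A (eta ++ [alpha]) -> exists l, l < n /\ A_set T kappa n l (g l) eta)).
      { intro alpha.
        assert (HAa : forall eta, A (eta ++ [alpha]) -> inprod T kappa n eta).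
        { intros eta Ha. apply HA in Ha. unfold inprod in *.
          destruct (snoc_inv _ _ _ _ _ Ha) as [r [a [E [Hr _]]]].
          apply app_inj_tail in E. destruct E; subst; auto. }
        destruct (classic (J T kappa I n (fun eta => A (eta ++ [alpha])))) as [HJ|HJ].
        - destruct (proj1 (IH _ HAa) HJ) as [g [G1 G2]]. exists g. split; auto.
        - exists (fun _ _ _ => False). split.
          + intros l _ rho _. destruct (HI l) as [_ [H0 _]]. exact H0.
          + intro; contradiction. }
      destruct (functional_choice _ Hex) as [g Hg].
      exists (fun l rho => if Nat.eq_dec l n then B else
                 match rev rho with [] => fun _ => False | a :: r => g a l (rev r) end).
      split.
      * intros l Hl rho Hrho. destruct (Nat.eq_dec l n) as [->|Hne]; [exact HB|].
        replace (S n - S l) with (S (n - S l)) in Hrho by lia.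
        destruct (snoc_inv _ _ _ _ _ Hrho) as [r [a [-> [Hr Ha]]]].
        rewrite rev_unit, rev_involutive.
        apply (proj1 (Hg a)); [lia|exact Hr].
      * intros eta Ha. pose proof (HA _ Ha) as Hin. unfold inprod in Hin.
        destruct (snoc_inv _ _ _ _ _ Hin) as [r [a [-> [Hr Hka]]]].
        assert (Lr : length r = n) by (destruct Hr; auto).
        destruct (classic (B a)) as [HBa|HBa].
        -- exists n. split; [lia|]. split; [exact Hin|].
           exists a. split.
           ++ rewrite nth_error_app2 by lia. rewrite Lr, Nat.sub_diag. reflexivity.
           ++ destruct (Nat.eq_dec n n); [exact HBa|congruence].
        -- assert (HJ : J T kappa I n (fun eta => A (eta ++ [a]))).
           { apply NNPP. intro HJ. apply HBa. split; auto. }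
           destruct (proj2 (Hg a) HJ r Ha) as [l [Hl [_ [x [Hx Hf]]]]].
           exists l. split; [lia|]. split; [exact Hin|]. exists x. split.
           ++ rewrite nth_error_app1 by lia. exact Hx.
           ++ destruct (Nat.eq_dec l n); [lia|].
              rewrite skipn_snoc by lia. rewrite rev_unit, rev_involutive. exact Hf.
    + intros [f [F1 F2]]. split; [exact HA|].
      destruct (HI n) as [_ [_ [Hsub _]]].
      apply (Hsub _ (f n [])).
      { apply (F1 n); [lia|]. replace (S n - S n) with 0 by lia. split; [reflexivity|].
        intros i x Hi. destruct i; discriminate. }
      intros alpha [Hka HnJ]. apply NNPP. intro HnB. apply HnJ.
      assert (HAa : forall eta, A (eta ++ [alpha]) -> inprod T kappa n eta).
      { intros eta Ha. apply HA in Ha. unfold inprod in *.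
        destruct (snoc_inv _ _ _ _ _ Ha) as [r [a [E [Hr _]]]].
        apply app_inj_tail in E. destruct E; subst; auto. }
      apply (proj2 (IH _ HAa)).
      exists (fun l r => f l (r ++ [alpha])). split.
      * intros l Hl rho Hrho. apply F1; [lia|].
        replace (S n - S l) with (S (n - S l)) by lia.
        apply snoc_in; auto. replace (S l + (n - S l)) with n by lia. exact Hka.
      * intros eta Ha. pose proof (HAa _ Ha) as Hin.
        assert (Le : length eta = n) by (destruct Hin; auto).
        destruct (F2 _ Ha) as [l [Hl [Hin' [x [Hx Hf]]]]].
        destruct (Nat.eq_dec l n) as [->|Hne].
        -- exfalso. apply HnB.
           rewrite nth_error_app2 in Hx by lia. rewrite Le, Nat.sub_diag in Hx.
           simpl in Hx. inversion Hx; subst.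
           rewrite skipn_all2 in Hf; [exact Hf|]. rewrite length_app; simpl; lia.
        -- exists l. split; [lia|]. split; [exact Hin|]. exists x. split.
           ++ rewrite nth_error_app1 in Hx by lia. exact Hx.
           ++ rewrite skipn_snoc in Hf by lia. exact Hf.
Qed.
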